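(* Let $G$ be a locally nilpotent group which is not periodic. Then $G$ contains no finite contranormal subgroups.
   Context: A subgroup $H$ of $G$ is contranormal in $G$ if its normal closure $H^G$ equals $G$. *)

(* Defs.v *)
From HB Require Import structures.
From mathcomp Require Import all_boot.
From mathcomp Require Import monoid.

Set Implicit Arguments.
Unset Strict Implicit.
Unset Printing Implicit Defensive.

Local Open Scope group_scope.

Section GroupDefs.
Variable G : groupType.
Implicit Types (x y : G) (H K N S : G -> Prop).

Definition is_subgroup H : Prop :=
  [/\ H 1, (forall x y, H x -> H y -> H (x * y)) & (forall x, H x -> H x^-1)].

Definition generated S : G -> Prop :=
  fun x => forall K, is_subgroup K -> (forall y, S y -> K y) -> K x.

Definition is_normal N : Prop :=
  is_subgroup N /\ forall x g : G, N x -> N (x ^ g).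

Definition normal_closure H : G -> Prop :=
  fun x => forall N, is_normal N -> (forall y, H y -> N y) -> N x.

Definition contranormal H : Prop := forall x, normal_closure H x.

Definition finite_subset H : Prop := exists s : seq G, forall x, H x -> x \in s.

Definition periodic : Prop := forall x, exists2 n : nat, (0 < n)%N & x ^+ n = 1.

(* lower central series of a subgroup K: gamma_1(K) = K (index 0 here),
   gamma_{i+1}(K) = [gamma_i(K), K] *)
Fixpoint lower_central K (n : nat) : G -> Prop :=
  match n with
  | 0 => K
  | n'.+1 => generated (fun z => exists a b, [/\ lower_central K n' a, K b
                                              & z = [~ a, b]])
  end.

Definition nilpotent K : Prop := exists c : nat, forall x, lower_central K c x -> x = 1.

Definition locally_nilpotent : Prop :=
  forall s : seq G, nilpotent (generated (fun x => x \in s)).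

End GroupDefs.

(* Main.v *)
Require Import Defs.
From HB Require Import structures.
From mathcomp Require Import all_boot.
From mathcomp Require Import monoid.

Set Implicit Arguments.
Unset Strict Implicit.
Unset Printing Implicit Defensive.
Local Open Scope group_scope.

Lemma gen_sub (G : groupType) (S : G -> Prop) : is_subgroup (generated S).
Proof.
split.
- by move=> K [] .
- by move=> x y hx hy K sK hS; case: (sK) => _ hm _; apply: hm; [apply: hx|apply: hy].
- by move=> x hx K sK hS; case: (sK) => _ _ hi; apply: hi; apply: hx.
Qed.

Lemma gen_in (G : groupType) (S : G -> Prop) y : S y -> generated S y.
Proof. by move=> hy K _ hS; apply: hS. Qed.

Lemma gen_ind (G : groupType) (S K : G -> Prop) :
  is_subgroup K -> (forall y, S y -> K y) -> forall x, generated S x -> K x.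
Proof. by move=> sK hS x hx; apply: hx. Qed.

Lemma sg1 (G : groupType) (K : G -> Prop) : is_subgroup K -> K 1.
Proof. by case. Qed.
Lemma sgM (G : groupType) (K : G -> Prop) x y : is_subgroup K -> K x -> K y -> K (x * y).
Proof. by case=> _ h _; apply: h. Qed.
Lemma sgV (G : groupType) (K : G -> Prop) x : is_subgroup K -> K x -> K x^-1.
Proof. by case=> _ _ h; apply: h. Qed.
Lemma sgX (G : groupType) (K : G -> Prop) x n : is_subgroup K -> K x -> K (x ^+ n).
Proof.
move=> sK hx; elim: n => [|n IH]; first by rewrite expg0; apply: sg1.
by rewrite expgS; apply: sgM.
Qed.
Arguments sgX [G K x n].
Lemma sgJ (G : groupType) (K : G -> Prop) x y : is_subgroup K -> K x -> K y -> K (x ^ y).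
Proof. by move=> sK hx hy; rewrite conjgE; apply: (sgM sK); [apply: (sgV sK) | apply: (sgM sK)]. Qed.
Lemma sgR (G : groupType) (K : G -> Prop) x y : is_subgroup K -> K x -> K y -> K [~ x, y].
Proof. by move=> sK hx hy; rewrite commgEl; apply: (sgM sK); [apply: (sgV sK)|apply: (sgJ sK)]. Qed.

Lemma gen_mono (G : groupType) (S T : G -> Prop) :
  (forall y, S y -> T y) -> forall x, generated S x -> generated T x.
Proof. by move=> hST; apply: (gen_ind (gen_sub T)) => y /hST; apply: gen_in. Qed.

Lemma lc_mono (G : groupType) (A B : G -> Prop) :
  (forall x, A x -> B x) -> forall j x, lower_central A j x -> lower_central B j x.
Proof.
move=> hAB; elim=> [|j IH] x //=; first exact: hAB.
apply: gen_mono => z [a [b [ha hb ->]]]; exists a, b; split; [exact: IH|exact: hAB|by []].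
Qed.

Lemma commMr (G : groupType) (a b c : G) : [~ a, b * c] = [~ a, c] * [~ a, b] ^ c.
Proof.
rewrite !commgEl !conjgE !invgM !mulgA.
by rewrite !mulgK.
Qed.


Section Tor.
Variable G : groupType.
Variable S : G -> Prop.
Hypothesis Stor : forall s, S s -> exists2 n, (0 < n)%N & s ^+ n = 1.

Let M := generated S.
Let gam := lower_central M.

Lemma sM : is_subgroup M. Proof. exact: gen_sub. Qed.
Lemma sgam j : is_subgroup (gam j). Proof. by case: j => [|j]; apply: gen_sub. Qed.

Lemma gamM j x : gam j x -> M x.
Proof.
elim: j x => [|j IH] //; apply: (gen_ind sM) => z [a [b [ha hb ->]]].
by apply: (sgR sM) => //; apply: IH.
Qed.

Lemma commgam j a b : gam j a -> M b -> gam j.+1 [~ a, b].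
Proof. by move=> ha hb; apply: gen_in; exists a, b. Qed.

Lemma gamJ j x m : gam j x -> M m -> gam j (x ^ m).
Proof.
elim: j x m => [|j IH] x m; first by move=> hx hm; apply: (sgJ sM).
move=> hx; move: x hx m; apply: gen_ind.
  split.
  - by move=> m hm; rewrite conj1g; apply: (sg1 (sgam _)).
  - by move=> x y hx hy m hm; rewrite conjMg; apply: (sgM (sgam _)) => //; [apply: hx|apply: hy].
  - by move=> x hx m hm; rewrite conjVg; apply: (sgV (sgam _)) => //; apply: hx.
move=> z [a [b [ha hb ->]]] m hm; rewrite conjRg; apply: commgam; first exact: IH.
exact: (sgJ sM).
Qed.

Definition cg (N : G -> Prop) x y := N (x * y^-1).
Definition tor (N : G -> Prop) x := exists2 k, (0 < k)%N & N (x ^+ k).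

Section Cong.
Variable N : G -> Prop.
Hypothesis sN : is_subgroup N.
Hypothesis nN : forall x m, N x -> M m -> N (x ^ m).

Lemma cg_refl x : cg N x x. Proof using sN nN. by rewrite /cg mulgV; apply: sg1. Qed.
Lemma cg_sym x y : cg N x y -> cg N y x.
Proof using sN nN. by rewrite /cg => h; have := sgV sN h; rewrite invgM invgK. Qed.
Lemma cg_trans y x z : cg N x y -> cg N y z -> cg N x z.
Proof using sN nN. by rewrite /cg => h1 h2; have := sgM sN h1 h2; rewrite mulgA mulgVK. Qed.
Lemma cg_mulr z x y : cg N x y -> cg N (x * z) (y * z).
Proof using sN nN. by rewrite /cg mulgKA. Qed.
Lemma cg_mull z x y : M z -> cg N x y -> cg N (z * x) (z * y).
Proof using sN nN.
rewrite /cg => hz h; have := nN h (sgV sM hz).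
by rewrite conjgE invgK invgM !mulgA.
Qed.
Lemma cg_N x y : cg N x y -> N y -> N x.
Proof using sN nN. by rewrite /cg => h1 h2; have := sgM sN h1 h2; rewrite mulgVK. Qed.
Lemma cg_X x y k : M x -> M y -> cg N x y -> cg N (x ^+ k) (y ^+ k).
Proof using sN nN.
move=> hx hy h; elim: k => [|k IH]; first exact: cg_refl.
rewrite !expgSr; apply: (cg_trans (y := y ^+ k * x)); first exact: cg_mulr.
by apply: cg_mull => //; apply: (sgX sM).
Qed.
Lemma tor_cg x y : M x -> M y -> cg N x y -> tor N y -> tor N x.
Proof using sN nN. move=> hx hy h [k k0 hk]; exists k => //; exact: cg_N (cg_X k hx hy h) hk. Qed.
Lemma tor_inv x : tor N x -> tor N x^-1.
Proof using sN nN. by case=> k k0 hk; exists k => //; rewrite expVgn; apply: (sgV sN). Qed.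
End Cong.

Section Level.
Variable j : nat.
Let N := gam j.+1.
Let sN : is_subgroup N := sgam j.+1.
Let nN : forall x m, N x -> M m -> N (x ^ m) := fun x m => @gamJ j.+1 x m.

Lemma central g m : gam j g -> M m -> cg N (m * g) (g * m).
Proof.
move=> hg hm; have := sgV sN (commgam (sgV (sgam j) hg) (sgV sM hm)).
by rewrite /cg invgR commgEl conjgE !invgK invgM !mulgA.
Qed.

Lemma cg_conj g m : gam j g -> M m -> cg N (g ^ m) g.
Proof.
move=> hg hm; rewrite conjgE -{2}(mulKg m g).
apply: (cg_mull sN nN) => //; first exact: (sgV sM).
by apply: (cg_sym sN nN) => //; apply: central.
Qed.

Lemma Xmul g h k : gam j g -> M h -> cg N ((g * h) ^+ k) (g ^+ k * h ^+ k).
Proof.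
move=> hg hh; have hgM := gamM hg; elim: k => [|k IH].
  by rewrite !expg0 mulg1; apply: (cg_refl sN nN).
rewrite !expgSr; apply: (cg_trans sN nN (y := g ^+ k * h ^+ k * (g * h))).
  exact: (cg_mulr sN nN).
have -> : g ^+ k * h ^+ k * (g * h) = g ^+ k * (h ^+ k * g) * h by rewrite !mulgA.
have -> : g ^+ k * g * (h ^+ k * h) = g ^+ k * (g * h ^+ k) * h by rewrite !mulgA.
apply: (cg_mulr sN nN); apply: (cg_mull sN nN) => //; first exact: (sgX sM).
by apply: central => //; apply: (sgX sM).
Qed.

Lemma tor_mul g h : gam j g -> gam j h -> tor N g -> tor N h -> tor N (g * h).
Proof.
move=> hg hh [a a0 ha] [b b0 hb]; exists (a * b)%N; first by rewrite muln_gt0 a0.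
apply: (cg_N sN nN (Xmul _ hg (gamM hh))).
apply: (sgM sN); first by rewrite expgnA; apply: (sgX sN).
by rewrite mulnC expgnA; apply: (sgX sN).
Qed.
End Level.

Lemma sKj j : is_subgroup (fun g => gam j g /\ tor (gam j.+1) g).
Proof.
  split.
  - split; first exact: sg1 (sgam j).
    by exists 1%N => //; rewrite expg1; apply: sg1 (sgam _).
  - move=> x y [hx tx] [hy ty]; split; first exact: (sgM (sgam j)).
    exact: tor_mul.
  - move=> x [hx tx]; split; first exact: (sgV (sgam j)).
    exact: (tor_inv (sgam j.+1) (fun x m => @gamJ j.+1 x m) tx).
Qed.

Lemma step j g : gam j g -> tor (gam j.+1) g.
Proof.
suff: forall g, gam j g -> gam j g /\ tor (gam j.+1) g by move=> h /h[].
case: j => [|i].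
  apply: (gen_ind (sKj 0)) => s hs; split; first exact: gen_in.
  case: (Stor hs) => n n0 hn; exists n => //; rewrite hn; exact: sg1 (sgam _).
apply: (gen_ind (sKj _)) => z [a [b [ha hb ->]]]; split; first exact: commgam.
set N := gam i.+2.
have sN : is_subgroup N by apply: sgam.
have nN : forall x m, N x -> M m -> N (x ^ m) by move=> x m; apply: gamJ.
have cga : forall b, M b -> gam i.+1 [~ a, b] by move=> b'; apply: commgam.
have cgaM : forall b, M b -> M [~ a, b] by move=> b' hb'; apply: gamM (cga _ hb').
suff: forall b, M b -> tor N [~ a, b] by apply.
have powc : forall s k, M s -> cg N [~ a, s ^+ k] ([~ a, s] ^+ k).
  move=> s k hs; elim: k => [|k IH]; first by rewrite expg0 commg1; apply: (cg_refl sN nN).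
  rewrite expgSr expgS commMr; apply: (cg_mull sN nN); first exact: cgaM.
  apply: (cg_trans sN nN (y := [~ a, s ^+ k])) => //.
  by apply: cg_conj => //; apply: cga; apply: (sgX sM).
pose K' := fun b => M b /\ tor N [~ a, b].
have sK' : is_subgroup K'.
  split.
  - by split; [apply: (sg1 sM) | exists 1%N => //; rewrite commg1 expg1; apply: (sg1 sN)].
  - move=> b1 b2 [h1 t1] [h2 t2]; split; first exact: (sgM sM).
    rewrite commMr; apply: (tor_cg sN nN (y := [~ a, b2] * [~ a, b1])).
    + by apply: (sgM sM); [apply: cgaM | apply: (sgJ sM) => //; apply: cgaM].
    + by apply: (sgM sM); apply: cgaM.
    + apply: (cg_mull sN nN); first exact: cgaM.
      exact: cg_conj (cga _ h1) h2.
    + by apply: tor_mul => //; apply: cga.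
  - move=> x [hx tx]; split; first exact: (sgV sM).
    have e : [~ a, x^-1] = ([~ a, x] ^ x^-1)^-1.
      have := commMr a x x^-1; rewrite mulgV commg1 => /esym/mulg1_eq <-.
      by rewrite invgK.
    rewrite e; apply: (tor_inv sN nN).
    apply: (tor_cg sN nN (y := [~ a, x])) => //.
    + by apply: (sgJ sM); [apply: cgaM | apply: (sgV sM)].
    + exact: cgaM.
    + by apply: cg_conj => //; [apply: cga | apply: (sgV sM)].
suff: forall b, M b -> K' b by move=> h b' /h[].
apply: (gen_ind sK') => s hs; have hsM : M s by apply: gen_in.
split=> //; case: (Stor hs) => n n0 hn; exists n => //.
apply: (cg_N sN nN (cg_sym sN nN (powc s n hsM))); rewrite hn commg1; exact: (sg1 sN).
Qed.

Lemma all_tor j m : M m -> exists2 n, (0 < n)%N & gam j (m ^+ n).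
Proof.
move=> hm; elim: j => [|j [n n0 hn]]; first by exists 1%N => //; rewrite expg1.
case: (step hn) => k k0 hk; exists (n * k)%N; first by rewrite muln_gt0 n0.
by rewrite expgnA.
Qed.

Lemma gen_torsion : nilpotent M -> forall m, M m -> exists2 n, (0 < n)%N & m ^+ n = 1.
Proof.
move=> [c hc] m hm; case: (all_tor c hm) => n n0 hn; exists n => //; exact: hc.
Qed.
End Tor.

Definition prodc (G : groupType) (l : seq (G * G)) : G :=
  foldr (fun p acc => p.1 ^ p.2 * acc) 1 l.

Fixpoint allp (G : groupType) (P : G * G -> Prop) (l : seq (G * G)) : Prop :=
  match l with [::] => True | p :: l' => P p /\ allp P l' end.

Fixpoint invl (G : groupType) (l : seq (G * G)) : seq (G * G) :=
  match l with [::] => [::] | p :: l' => invl l' ++ [:: (p.1^-1, p.2)] end.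

Definition conjl (G : groupType) (g : G) (l : seq (G * G)) := map (fun p => (p.1, p.2 * g)) l.

Lemma prodc_cat (G : groupType) (l1 l2 : seq (G * G)) : prodc (l1 ++ l2) = prodc l1 * prodc l2.
Proof. by elim: l1 => [|p l1 IH] /=; rewrite ?mul1g // IH mulgA. Qed.

Lemma allp_cat (G : groupType) P (l1 l2 : seq (G * G)) : allp P l1 -> allp P l2 -> allp P (l1 ++ l2).
Proof. by elim: l1 => [|p l1 IH] //= [h1 h2] h; split => //; apply: IH. Qed.

Lemma allp_mono (G : groupType) (P Q : G * G -> Prop) l : (forall p, P p -> Q p) -> allp P l -> allp Q l.
Proof. by move=> hPQ; elim: l => [|p l IH] //= [h1 h2]; split; [apply: hPQ | apply: IH]. Qed.

Lemma prodc_inv (G : groupType) (l : seq (G * G)) : (prodc l)^-1 = prodc (invl l).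
Proof.
elim: l => [|p l IH] /=; first by rewrite invg1.
by rewrite invgM IH prodc_cat /= mulg1 conjVg.
Qed.

Lemma allH_inv (G : groupType) (H : G -> Prop) l : is_subgroup H ->
  allp (fun p => H p.1) l -> allp (fun p => H p.1) (invl l).
Proof.
move=> sH; elim: l => [|p l IH] //= [h1 h2]; apply: allp_cat; first exact: IH.
by split => //=; apply: (sgV sH).
Qed.

Lemma prodc_conj (G : groupType) (g : G) l : prodc l ^ g = prodc (conjl g l).
Proof. by elim: l => [|p l IH] /=; rewrite ?conj1g // conjMg conjgM IH. Qed.

Lemma allH_conj (G : groupType) (H : G -> Prop) g l :
  allp (fun p => H p.1) l -> allp (fun p => H p.1) (conjl g l).
Proof. by elim: l => [|p l IH] //= [h1 h2]; split => //; apply: IH. Qed.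

Lemma nc_repr (G : groupType) (H : G -> Prop) : is_subgroup H ->
  forall x, normal_closure H x -> exists l, allp (fun p => H p.1) l /\ x = prodc l.
Proof.
move=> sH x hx; apply: (hx (fun x => exists l, allp (fun p => H p.1) l /\ x = prodc l)).
  split; first split.
  - by exists [::].
  - move=> a b [l1 [h1 ->]] [l2 [h2 ->]]; exists (l1 ++ l2); split; last by rewrite prodc_cat.
    exact: allp_cat.
  - move=> a [l [h ->]]; exists (invl l); split; last by rewrite prodc_inv.
    exact: allH_inv.
  - move=> a g [l [h ->]]; exists (conjl g l); split; last by rewrite prodc_conj.
    exact: allH_conj.
move=> y hy; exists [:: (y, 1)]; split => //=.
by rewrite conjg1 mulg1.
Qed.

Lemma allsnd (G : groupType) (l : seq (G * G)) (t : seq G) :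
  {subset map snd l <= t} -> allp (fun p => p.2 \in t) l.
Proof.
elim: l => [|p l IH] //= hsub; split.
  by apply: hsub; rewrite inE eqxx.
by apply: IH => z hz; apply: hsub; rewrite inE hz orbT.
Qed.

Lemma fin_tor (G : groupType) (H : G -> Prop) (s : seq G) h :
  is_subgroup H -> (forall x, H x -> x \in s) -> H h -> exists2 n, (0 < n)%N & h ^+ n = 1.
Proof.
move=> sH hs hh.
pose t := mkseq (fun i => h ^+ i) (size s).+1.
have nu : ~~ uniq t.
  apply/negP => ut; have := uniq_leq_size ut.
  have sub : {subset t <= s}.
    by move=> z /mapP [i _ ->]; apply: hs; apply: (sgX sH).
  by move=> /(_ s sub); rewrite size_mkseq ltnn.
case/(uniqPn 1): nu => i [j [ij jt e]].
move: jt e; rewrite size_mkseq => jt.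
rewrite !nth_mkseq //; last exact: ltn_trans ij jt.
move=> e; exists (j - i)%N; first by rewrite subn_gt0.
apply: (mulgI (h ^+ i)); rewrite -expgnDr subnKC ?mulg1 //; last exact: ltnW.
Qed.

Lemma in_gen (G : groupType) (H K : G -> Prop) l :
  allp (fun p => H p.1) l -> allp (fun p => K p.2) l ->
  generated (fun y => exists h g, [/\ H h, K g & y = h ^ g]) (prodc l).
Proof.
elim: l => [|p l IH] /=; first by move=> _ _; apply: sg1 (gen_sub _).
case=> h1 h2 [k1 k2]; apply: (sgM (gen_sub _)); last exact: IH.
by apply: gen_in; exists p.1, p.2.
Qed.

Theorem lemma3p5 (G : groupType) :
  locally_nilpotent G -> ~ periodic G ->
  forall H : G -> Prop, is_subgroup H -> finite_subset H -> ~ contranormal H.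
Proof.
move=> lnG nper H sH [s hs] cn; apply: nper => x.
case: (nc_repr sH (cn x)) => l [hl ->].
pose t := s ++ map snd l.
pose K := generated (fun y => y \in t).
have sK : is_subgroup K by apply: gen_sub.
pose S := fun y => exists h g, [/\ H h, K g & y = h ^ g].
have Stor : forall y, S y -> exists2 n, (0 < n)%N & y ^+ n = 1.
  move=> y [h [g [hh _ ->]]]; case: (fin_tor sH hs hh) => n n0 hn.
  by exists n => //; rewrite -conjXg hn conj1g.
have MK : forall y, generated S y -> K y.
  apply: (gen_ind sK) => y [h [g [hh hg ->]]]; apply: (sgJ sK) => //.
  by apply: gen_in; rewrite mem_cat hs.
have nilM : nilpotent (generated S).
  case: (lnG t) => c hc; exists c => y hy; apply: hc.
  exact: lc_mono MK c y hy.
apply: (gen_torsion Stor nilM).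
have hlK : allp (fun p => K p.2) l.
  apply: (allp_mono (P := fun p => p.2 \in t)); first by move=> p hp; apply: gen_in.
  by apply: allsnd => z hz; rewrite mem_cat hz orbT.
exact: in_gen.
Qed.
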